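(* Let $M'(t,y)$ be as in the context, and let $(Z^1_n)_{n\ge1}$ be càglàd predictable processes of bounded quadratic variation on $[0,T]$ converging a.s. to a càglàd predictable process $Z^1$ of bounded quadratic variation on $[0,T]$, with $\sup_{n\ge1}[Z^1_n,Z^1_n]_T<\infty$. Then $B^{Z^1_n}_T\to B^{Z^1}_T$ a.s., where for a càglàd process $Z$, $$B^{Z}_T=\sum_{0\le s<T}\tfrac12\big[M'(s,Z_{s+}-Z_s)-M'(s,0)\big](Z_{s+}-Z_s)^2 .$$
   Context: Fix $T>0$ and a filtered probability space $(\Omega,\mathcal F,(\mathcal F_t)_{t\in[0,T]},\mathbb P)$ satisfying the usual conditions. $A(t,y)$, $B(t,y)$ are ask and bid prices for an order of size $y$: adapted, non-negative, $C^2$ in $y$, with $A(\cdot,0),B(\cdot,0)$ non-negative locally bounded semimartingales and with first and second $y$-derivatives càdlàg and locally bounded in $t$. $M(t,y)=\tfrac12(A(t,y)+B(t,y))$ and $M'=\partial M/\partial y$. Quadratic variation $[Z,Z]_t$ is the pathwise limit of $\sum_{i\ge1}|Z_{\tau^n_i}-Z_{\tau^n_{i-1}}|^2$ along every sequence of stopping-time partitions of $[0,t]$ tending to the identity; bounded quadratic variation means this limit exists and is finite a.s. *)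

(* Defs.v *)
From mathcomp Require Import all_boot all_order all_algebra.
From mathcomp Require Import all_classical all_reals all_analysis.

Set Implicit Arguments.
Unset Strict Implicit.
Unset Printing Implicit Defensive.
Import Order.TTheory GRing.Theory Num.Theory.
Import numFieldNormedType.Exports.
Local Open Scope classical_set_scope.
Local Open Scope ring_scope.

Section defs.
Context {R : realType} {d : measure_display} {Omega : measurableType d}.

(* A process on [0,T] is a map (t, w) |-> X t w; filtrations are R-indexed
   families of set systems on Omega, only their restriction to [0,T] matters. *)

Definition filtration (F : R -> set (set Omega)) (T : R) :=
  (forall t, 0 <= t <= T -> sigma_algebra setT (F t) /\ F t `<=` measurable) /\
  (forall s t, 0 <= s -> s <= t -> t <= T -> F s `<=` F t).

Definition usual_conditions (P : probability Omega R)
    (F : R -> set (set Omega)) (T : R) :=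
  filtration F T /\
  (forall t, 0 <= t < T -> forall A, (forall u, t < u <= T -> F u A) -> F t A) /\
  (forall N, measurable N -> P N = 0%E -> forall A, A `<=` N -> F 0 A).

Definition adapted (F : R -> set (set Omega)) (T : R) (X : R -> Omega -> R) :=
  forall t, 0 <= t <= T -> forall B : set R, measurable B -> F t (X t @^-1` B).

Definition stopping_time (F : R -> set (set Omega)) (T : R) (tau : Omega -> R) :=
  (forall w, 0 <= tau w) /\
  (forall t, 0 <= t <= T -> F t [set w | tau w <= t]).

Definition localizing (P : probability Omega R) (F : R -> set (set Omega))
    (T : R) (tau : nat -> Omega -> R) :=
  (forall k, stopping_time F T (tau k)) /\
  (forall k w, tau k w <= tau k.+1 w) /\
  {ae P, forall w, forall C : R, exists k, C <= tau k w}.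

Definition stopped (X : R -> Omega -> R) (tau : Omega -> R) : R -> Omega -> R :=
  fun t w => X (Num.min t (tau w)) w.

Definition cadlag_on (T : R) (f : R -> R) :=
  (forall t, 0 <= t < T -> f @ t^'+ --> f t) /\
  (forall t, 0 < t <= T -> cvg (f @ t^'-)).

Definition caglad_on (T : R) (f : R -> R) :=
  (forall t, 0 < t <= T -> f @ t^'- --> f t) /\
  (forall t, 0 <= t < T -> cvg (f @ t^'+)).

(** martingale on [0,T] (conditional expectations expressed through their
    defining property) *)
Definition martingale (P : probability Omega R) (F : R -> set (set Omega))
    (T : R) (X : R -> Omega -> R) :=
  adapted F T X /\
  (forall t, 0 <= t <= T -> P.-integrable setT (fun w => (X t w)%:E)) /\
  (forall s t, 0 <= s -> s <= t -> t <= T -> forall A, F s A ->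
     (\int[P]_(w in A) (X t w)%:E = \int[P]_(w in A) (X s w)%:E)%E).

Definition local_martingale (P : probability Omega R) (F : R -> set (set Omega))
    (T : R) (X : R -> Omega -> R) :=
  (forall w, cadlag_on T (X^~ w)) /\
  exists tau, localizing P F T tau /\ forall k, martingale P F T (stopped X (tau k)).

Definition semimartingale (P : probability Omega R) (F : R -> set (set Omega))
    (T : R) (X : R -> Omega -> R) :=
  adapted F T X /\ (forall w, cadlag_on T (X^~ w)) /\
  exists Mg V : R -> Omega -> R,
    local_martingale P F T Mg /\ (forall w, Mg 0 w = 0) /\
    adapted F T V /\ (forall w, cadlag_on T (V^~ w)) /\ (forall w, V 0 w = 0) /\
    (forall w, bounded_variation 0 T (V^~ w)) /\
    (forall t w, 0 <= t <= T -> X t w = X 0 w + Mg t w + V t w).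

Definition locally_bounded (P : probability Omega R) (F : R -> set (set Omega))
    (T : R) (X : R -> Omega -> R) :=
  exists tau, localizing P F T tau /\
  exists C : nat -> R, forall k t w, 0 <= t <= T -> 0 < tau k w ->
    `|stopped X (tau k) t w| <= C k.

Definition D1 (A : R -> R -> Omega -> R) : R -> R -> Omega -> R :=
  fun t y w => derive1 (fun z => A t z w) y.
Definition D2 (A : R -> R -> Omega -> R) : R -> R -> Omega -> R :=
  fun t y w => derive1 (derive1 (fun z => A t z w)) y.

Definition locally_bounded_in_t (P : probability Omega R)
    (F : R -> set (set Omega)) (T : R) (G : R -> R -> Omega -> R) :=
  forall r : R, 0 < r -> exists tau, localizing P F T tau /\
  exists C : nat -> R, forall k t y w, 0 <= t <= T -> `|y| <= r -> 0 < tau k w ->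
    `|G (Num.min t (tau k w)) y w| <= C k.

(** standing assumptions on an ask (or bid) price surface *)
Definition price_surface (P : probability Omega R) (F : R -> set (set Omega))
    (T : R) (A : R -> R -> Omega -> R) :=
  (forall y, adapted F T (fun t => A t y)) /\
  (forall t y w, 0 <= A t y w) /\
  (forall t w, 0 <= t <= T ->
     (forall y, derivable (fun z => A t z w) y 1) /\
     (forall y, derivable (derive1 (fun z => A t z w)) y 1) /\
     continuous (derive1 (derive1 (fun z => A t z w)))) /\
  semimartingale P F T (fun t => A t 0) /\
  locally_bounded P F T (fun t => A t 0) /\
  (forall y w, cadlag_on T (fun t => D1 A t y w)) /\
  (forall y w, cadlag_on T (fun t => D2 A t y w)) /\
  locally_bounded_in_t P F T (D1 A) /\
  locally_bounded_in_t P F T (D2 A).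

Definition Mp (A B : R -> R -> Omega -> R) : R -> R -> Omega -> R :=
  fun t y w => derive1 (fun z => (A t z w + B t z w) / 2) y.

Definition pred_rectangles (F : R -> set (set Omega)) (T : R) : set (set (R * Omega)) :=
  [set E | (exists A, F 0 A /\ E = [set 0] `*` A) \/
           (exists s u A, [/\ 0 <= s, s < u, u <= T, F s A &
                              E = `]s, u] `*` A])].

Definition predictable (F : R -> set (set Omega)) (T : R) (X : R -> Omega -> R) :=
  measurable_fun (`[0, T] `*` setT : set (g_sigma_algebraType (pred_rectangles F T)))
    ((fun p : R * Omega => X p.1 p.2) : g_sigma_algebraType (pred_rectangles F T) -> R).

Definition st_partition (F : R -> set (set Omega)) (T t : R) (tau : nat -> Omega -> R) :=
  (forall i, stopping_time F T (tau i)) /\ (forall w, tau 0%N w = 0) /\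
  (forall i w, tau i w <= tau i.+1 w) /\ (forall i w, tau i w <= t) /\
  (forall w, exists i, tau i w = t).

Definition partitions_to_id (P : probability Omega R) (F : R -> set (set Omega))
    (T t : R) (tau : nat -> nat -> Omega -> R) :=
  (forall n, st_partition F T t (tau n)) /\
  {ae P, forall w, forall e : R, 0 < e ->
     \forall n \near \oo, forall i, tau n i.+1 w - tau n i w <= e}.

(** sum_{i >= 1} |Z_{tau_i} - Z_{tau_{i-1}}|^2 (finitely many non-zero terms) *)
Definition qv_sum (Z : R -> Omega -> R) (tau : nat -> Omega -> R) (w : Omega) : R :=
  lim ((fun m => \sum_(i < m) (Z (tau i.+1 w) w - Z (tau i w) w) ^+ 2) @ \oo).

Definition is_qv (P : probability Omega R) (F : R -> set (set Omega)) (T : R)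
    (Z Q : R -> Omega -> R) :=
  forall t, 0 <= t <= T -> forall tau, partitions_to_id P F T t tau ->
    {ae P, forall w, (fun n => qv_sum Z (tau n) w) @ \oo --> Q t w}.

Definition bounded_qv (P : probability Omega R) (F : R -> set (set Omega)) (T : R)
    (Z : R -> Omega -> R) := exists Q, is_qv P F T Z Q.

Definition caglad_predictable (F : R -> set (set Omega)) (T : R) (Z : R -> Omega -> R) :=
  (forall w, caglad_on T (Z^~ w)) /\ predictable F T Z.

End defs.

(** unordered sum over a (possibly uncountable) set of real numbers:
    (sum of positive parts) - (sum of negative parts); equals the usual sum
    for absolutely summable families *)
Definition sumR {R : realType} (S : set R) (g : R -> R) : R :=
  fine (\esum_(s in S) (Num.max (g s) 0)%:E) - fine (\esum_(s in S) (Num.max (- g s) 0)%:E).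

Definition rjump {R : realType} (f : R -> R) (s : R) : R := lim (f @ s^'+) - f s.

Definition BZ {R : realType} {d : measure_display} {Omega : measurableType d}
    (A B : R -> R -> Omega -> R) (T : R) (Z : R -> Omega -> R) (w : Omega) : R :=
  sumR [set s | 0 <= s < T]
    (fun s => 2^-1 * (Mp A B s (rjump (Z^~ w) s) w - Mp A B s 0 w) * (rjump (Z^~ w) s) ^+ 2).

(* Main.v *)
Require Import Defs.
From mathcomp Require Import all_boot all_order all_algebra.
From mathcomp Require Import all_classical all_reals all_analysis.
Import Order.TTheory GRing.Theory Num.Theory.
Import numFieldNormedType.Exports.
Local Open Scope classical_set_scope.
Local Open Scope ring_scope.
From mathcomp Require Import ring lra.
Section esumL.
Variable R : realType.

Lemma fsets_seq (S : set R) (X : set R) : fsets S X ->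
  exists s : seq R, [/\ uniq s, (forall x, x \in s -> S x) &
    forall f : R -> R, (\sum_(x \in X) (f x)%:E = (\sum_(x <- s) f x)%:E)%E].
Proof.
move=> [finX XS]; exists (finmap.enum_fset (fset_set X)); split.
- exact: finmap.fset_uniq.
- by move=> x; rewrite in_fset_set// inE => /XS.
- by move=> f; rewrite fsumEFin// fsbig_finite.
Qed.

Arguments fsets_seq {S X}.

Lemma esum_ub (S : set R) (f : R -> R) (c : R) :
  (forall s : seq R, uniq s -> (forall x, x \in s -> S x) -> \sum_(x <- s) f x <= c) ->
  (\esum_(x in S) (f x)%:E <= c%:E)%E.
Proof.
move=> H; apply: ge_ereal_sup => _ [X hX <-].
have [s [us sS ->]] := fsets_seq hX; rewrite lee_fin; exact: H.
Qed.
Arguments esum_ub {S f c}.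

Lemma esum_close (S : set R) (a b : R -> R) (Ca Cb del : R) :
 (forall x, 0 <= a x) -> (forall x, 0 <= b x) ->
 (forall s : seq R, uniq s -> (forall x, x \in s -> S x) -> \sum_(x <- s) a x <= Ca) ->
 (forall s : seq R, uniq s -> (forall x, x \in s -> S x) -> \sum_(x <- s) b x <= Cb) ->
 (forall s : seq R, uniq s -> (forall x, x \in s -> S x) -> \sum_(x <- s) `|a x - b x| <= del) ->
 `|fine (\esum_(x in S) (a x)%:E) - fine (\esum_(x in S) (b x)%:E)| <= del.
Proof.
move=> a0 b0 Ha Hb Hd.
have ea0 : (0 <= \esum_(x in S) (a x)%:E)%E by apply: esum_ge0 => x _; rewrite lee_fin.
have eb0 : (0 <= \esum_(x in S) (b x)%:E)%E by apply: esum_ge0 => x _; rewrite lee_fin.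
have eaC := esum_ub Ha; have ebC := esum_ub Hb.
have fa : \esum_(x in S) (a x)%:E \is a fin_num by rewrite ge0_fin_numE// (le_lt_trans eaC)// ltry.
have fb : \esum_(x in S) (b x)%:E \is a fin_num by rewrite ge0_fin_numE// (le_lt_trans ebC)// ltry.
have key : forall (a b : R -> R), (forall s : seq R, uniq s -> (forall x, x \in s -> S x) -> \sum_(x <- s) `|a x - b x| <= del) ->
   \esum_(x in S) (a x)%:E \is a fin_num ->
   \esum_(x in S) (b x)%:E \is a fin_num ->
   fine (\esum_(x in S) (a x)%:E) <= fine (\esum_(x in S) (b x)%:E) + del.
  move=> a' b' Hd' fa' fb'.
  have : (\esum_(x in S) (a' x)%:E <= (fine (\esum_(x in S) (b' x)%:E) + del)%:E)%E.
    apply: ge_ereal_sup => _ [X hX <-].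
    have [s [us sS E]] := fsets_seq hX.
    have : (\sum_(x \in X) (b' x)%:E <= \esum_(x in S) (b' x)%:E)%E.
      by apply: ereal_sup_ubound; exists X.
    rewrite -(fineK fb') !E lee_fin => le1.
    rewrite lee_fin.
    apply: (le_trans _ (lerD le1 (Hd' s us sS))).
    rewrite -big_split /=; apply: ler_sum => x _.
    by rewrite -lerBlDl (le_trans (ler_norm _))// distrC.
  by rewrite -(fineK fa') lee_fin.
rewrite ler_norml; apply/andP; split.
  by rewrite lerNl opprB lerBlDl key// => s us sS; rewrite (eq_bigr (fun x => `|a x - b x|)) ?Hd// => x _; rewrite distrC.
by rewrite lerBlDl key.
Qed.
End esumL.
Section ptw.
Variable R : realType.

Lemma max0_lip (x y : R) : `|Num.max x 0 - Num.max y 0| <= `|x - y|.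
Proof.
have [hx|hx] := leP x 0; have [hy|hy] := leP y 0.
- by rewrite subrr normr0.
- rewrite sub0r normrN gtr0_norm // ler_normr; apply/orP; right; lra.
- rewrite subr0 gtr0_norm // ler_normr; apply/orP; left; lra.
- by [].
Qed.

Lemma g_lip (K r y y' p0 py py' : R) : 0 <= K -> `|y| <= r -> `|y'| <= r ->
  `|py - py'| <= K * `|y - y'| -> `|py' - p0| <= K * `|y'| ->
  `|2^-1 * (py - p0) * y ^+ 2 - 2^-1 * (py' - p0) * y' ^+ 2| <= 2 * K * `|y - y'| * (y ^+ 2 + y' ^+ 2).
Proof.
move=> K0 hy hy' h1 h2.
have -> : 2^-1 * (py - p0) * y ^+ 2 - 2^-1 * (py' - p0) * y' ^+ 2 =
   2^-1 * ((py - py') * y ^+ 2 + (py' - p0) * (y - y') * (y + y')) by ring.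
rewrite normrM ger0_norm ?invr_ge0 ?ler0n //.
have t1 : `|(py - py') * y ^+ 2| <= K * `|y - y'| * y ^+ 2.
  by rewrite normrM (ger0_norm (sqr_ge0 y)) ler_wpM2r // sqr_ge0.
have t2 : `|(py' - p0) * (y - y') * (y + y')| <= K * `|y - y'| * (`|y'| * (`|y| + `|y'|)).
  rewrite !normrM; have := ler_normD y y'.
  have := normr_ge0 (py' - p0); have := normr_ge0 (y - y'); have := normr_ge0 (y + y'); have := normr_ge0 y'; have := normr_ge0 y.
  move: h2; set a := `|py' - p0|; set b := `|y - y'|; set c := `|y + y'|; set d1 := `|y'|; set d2 := `|y|.
  move=> h2 hd2 hd1 hc hb ha hc'.
  apply: (@le_trans _ _ (K * d1 * b * c)).
    by rewrite ler_wpM2r // ler_wpM2r.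
  have -> : K * d1 * b * c = K * b * (d1 * c) by ring.
  by rewrite ler_wpM2l ?mulr_ge0 // ler_wpM2l.
have t3 : `|y'| * (`|y| + `|y'|) <= 2 * (y ^+ 2 + y' ^+ 2).
  rewrite -(real_normK (num_real y)) -(real_normK (num_real y')).
  have := normr_ge0 y; have := normr_ge0 y'; nra.
have Kb : 0 <= K * `|y - y'| by rewrite mulr_ge0.
have := ler_normD ((py - py') * y ^+ 2) ((py' - p0) * (y - y') * (y + y')).
have := ler_wpM2l Kb t3.
move: t1 t2 Kb; set u := `|_ + _|; set v1 := `|(py - py') * _|; set v2 := `|(py' - p0) * _ * _|.
have := sqr_ge0 y; have := sqr_ge0 y'.
move=> *; nra.
Qed.
End ptw.
Section sumRL.
Variable R : realType.

Lemma sum_ler_abs (s : seq R) (f g : R -> R) : (forall x, `|f x| <= g x) ->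
  \sum_(x <- s) f x <= \sum_(x <- s) g x.
Proof. by move=> h; apply: ler_sum => x _; apply: le_trans (ler_norm _) (h x). Qed.

Lemma sumR_close (S : set R) (g h : R -> R) (B del : R) :
 (forall s : seq R, uniq s -> (forall x, x \in s -> S x) -> \sum_(x <- s) `|g x| <= B) ->
 (forall s : seq R, uniq s -> (forall x, x \in s -> S x) -> \sum_(x <- s) `|h x| <= B) ->
 (forall s : seq R, uniq s -> (forall x, x \in s -> S x) -> \sum_(x <- s) `|g x - h x| <= del) ->
 `|sumR S g - sumR S h| <= del + del.
Proof.
move=> Hg Hh Hd; rewrite /sumR.
have -> : forall a b c d : R, a - b - (c - d) = (a - c) - (b - d) by move=> *; ring.
apply: (le_trans (ler_normB _ _)); apply: lerD.
- apply: (@esum_close R S _ _ B B) => //.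
  + by move=> x; rewrite le_max lexx orbT.
  + by move=> x; rewrite le_max lexx orbT.
  + move=> s us sS; apply: le_trans (Hg s us sS); apply: sum_ler_abs => x.
    by rewrite ger0_norm ?le_max ?lexx ?orbT // ge_max normr_ge0 ler_norm.
  + move=> s us sS; apply: le_trans (Hh s us sS); apply: sum_ler_abs => x.
    by rewrite ger0_norm ?le_max ?lexx ?orbT // ge_max normr_ge0 ler_norm.
  + move=> s us sS; apply: le_trans (Hd s us sS); apply: sum_ler_abs => x.
    by rewrite ger0_norm ?normr_ge0 // max0_lip.
- apply: (@esum_close R S _ _ B B) => //.
  + by move=> x; rewrite le_max lexx orbT.
  + by move=> x; rewrite le_max lexx orbT.
  + move=> s us sS; apply: le_trans (Hg s us sS); apply: sum_ler_abs => x.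
    by rewrite ger0_norm ?le_max ?lexx ?orbT // ge_max normr_ge0 -normrN ler_norm.
  + move=> s us sS; apply: le_trans (Hh s us sS); apply: sum_ler_abs => x.
    by rewrite ger0_norm ?le_max ?lexx ?orbT // ge_max normr_ge0 -normrN ler_norm.
  + move=> s us sS; apply: le_trans (Hd s us sS); apply: sum_ler_abs => x.
    rewrite ger0_norm ?normr_ge0 //. apply: (le_trans (@max0_lip R (- g x) (- h x))).
    by rewrite -opprD normrN.
Qed.
End sumRL.
Section conv.
Variable R : realType.

Lemma sq_le_abs (a r C : R) : 0 <= r -> a ^+ 2 <= C -> C <= r ^+ 2 -> `|a| <= r.
Proof.
move=> r0 h1 h2; have h := le_trans h1 h2; rewrite -(real_normK (num_real a)) in h.
have := normr_ge0 a; nra.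
Qed.

Definition Gf (phi : R -> R -> R) (j : R -> R) (x : R) : R :=
  2^-1 * (phi x (j x) - phi x 0) * j x ^+ 2.

Lemma sumR_conv (S : set R) (jn : nat -> R -> R) (j : R -> R) (phi : R -> R -> R) (C r K : R) :
 0 <= K -> 0 <= r -> C <= r ^+ 2 ->
 (forall n (s : seq R), uniq s -> (forall x, x \in s -> S x) -> \sum_(x <- s) jn n x ^+ 2 <= C) ->
 (forall s : seq R, uniq s -> (forall x, x \in s -> S x) -> \sum_(x <- s) j x ^+ 2 <= C) ->
 (forall e, 0 < e -> \forall n \near \oo, forall x, S x -> `|jn n x - j x| <= e) ->
 (forall x y y', S x -> `|y| <= r -> `|y'| <= r -> `|phi x y - phi x y'| <= K * `|y - y'|) ->
 (fun n => sumR S (Gf phi (jn n))) @ \oo --> sumR S (Gf phi j).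
Proof.
move=> K0 r0 Cr Hn Hj Hu Hl.
have C0 : 0 <= C by have := Hj [::] isT; rewrite big_nil; apply => x; rewrite in_nil.
have bn : forall n x, S x -> `|jn n x| <= r.
  move=> n x Sx; apply: (@sq_le_abs _ r C r0 _ Cr).
  have := Hn n [:: x] isT; rewrite big_seq1; apply => y; rewrite inE => /eqP ->.
  exact: Sx.
have bj : forall x, S x -> `|j x| <= r.
  move=> x Sx; apply: (@sq_le_abs _ r C r0 _ Cr).
  have := Hj [:: x] isT; rewrite big_seq1; apply => y; rewrite inE => /eqP ->.
  exact: Sx.
have gb : forall (f : R -> R) x, S x -> `|f x| <= r -> `|Gf phi f x| <= 2 * K * r * f x ^+ 2.
  move=> f x Sx hf.
  have h0 : `|0 : R| <= r by rewrite normr0.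
  have h2 : `|phi x 0 - phi x 0| <= K * `|0 : R| by rewrite subrr !normr0 mulr0.
  have := @g_lip R K r (f x) 0 (phi x 0) (phi x (f x)) (phi x 0) K0 hf h0 (Hl _ _ _ Sx hf h0) h2.
  rewrite subrr mulr0 mul0r subr0 subr0 expr0n /= addr0 => h.
  apply: (le_trans h); rewrite -!mulrA ler_wpM2l ?mulr0n ?ler0n // ler_wpM2l //.
  by rewrite ler_wpM2r // sqr_ge0.
have sb : forall (f : R -> R), (forall x, S x -> `|f x| <= r) ->
    (forall s : seq R, uniq s -> (forall x, x \in s -> S x) -> \sum_(x <- s) f x ^+ 2 <= C) ->
    forall s : seq R, uniq s -> (forall x, x \in s -> S x) -> \sum_(x <- s) `|Gf phi f x| <= 2 * K * r * C.
  move=> f hf hs s us sS.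
  apply: (@le_trans _ _ (\sum_(x <- s) 2 * K * r * f x ^+ 2)).
    by rewrite big_seq [X in _ <= X]big_seq; apply: ler_sum => x xs; apply: gb; [apply: sS| apply: hf; apply: sS].
  by rewrite -mulr_sumr ler_wpM2l ?hs // !mulr_ge0 // ler0n.
apply/cvgrPdist_le => eps eps0.
set D := 8 * K * C + 1.
have D0 : 0 < D by rewrite /D ltr_wpDl // !mulr_ge0 // ler0n.
have epsD : 0 < eps / D by rewrite divr_gt0.
near=> n.
have hu : forall x, S x -> `|jn n x - j x| <= eps / D by near: n; apply: Hu.
rewrite distrC.
apply: (le_trans (@sumR_close R S _ _ (2 * K * r * C) (2 * K * (eps / D) * (C + C)) _ _ _)).
- exact: (sb _ (bn n) (Hn n)).
- exact: (sb _ bj Hj).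
- move=> s us sS.
  apply: (@le_trans _ _ (\sum_(x <- s) 2 * K * (eps / D) * (jn n x ^+ 2 + j x ^+ 2))).
    rewrite big_seq [X in _ <= X]big_seq; apply: ler_sum => x xs.
    have Sx := sS x xs.
    have := @g_lip R K r (jn n x) (j x) (phi x 0) (phi x (jn n x)) (phi x (j x)) K0 (bn n x Sx) (bj x Sx)
      (Hl _ _ _ Sx (bn n x Sx) (bj x Sx)).
    have := Hl x (j x) 0 Sx (bj x Sx); rewrite normr0 r0 subr0 => /(_ isT) h2 /(_ h2) h.
    apply: (le_trans h); rewrite /Gf; apply: ler_wpM2r; first by rewrite addr_ge0 // sqr_ge0.
    by rewrite ler_wpM2l ?mulr_ge0 ?ler0n // hu.
  rewrite -mulr_sumr big_split /=; apply: ler_wpM2l; first by have eD0 := ltW epsD; apply: mulr_ge0 => //; apply: mulr_ge0.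
  by apply: lerD; [apply: Hn | apply: Hj].
- have -> : 2 * K * (eps / D) * (C + C) + 2 * K * (eps / D) * (C + C) = eps * ((8 * K * C) / D).
    rewrite /D; field; rewrite lt0r_neq0 //.
  rewrite ger_pMr // ler_pdivrMr // mul1r /D lerDl ler01.
Unshelve. all: by end_near.
Qed.
End conv.
Section A1.
Variable R : realType.

Lemma right_lim_eps (f : R -> R) x L : f @ x^'+ --> L ->
  forall e, 0 < e -> exists2 d, 0 < d & forall y, x < y -> y < x + d -> `|L - f y| <= e.
Proof.
move=> /cvgrPdist_le H e e0; have := H e e0; rewrite near_withinE.
case/nbhs_ballP => d d0 Hd; exists d => // y xy yd; apply: Hd => //.
rewrite -ball_normE /ball_ /= ltr_norml; apply/andP; split; lra.
Qed.

Lemma left_lim_eps (f : R -> R) x L : f @ x^'- --> L ->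
  forall e, 0 < e -> exists2 d, 0 < d & forall y, x - d < y -> y < x -> `|L - f y| <= e.
Proof.
move=> /cvgrPdist_le H e e0; have := H e e0; rewrite near_withinE.
case/nbhs_ballP => d d0 Hd; exists d => // y xy yd; apply: Hd => //.
rewrite -ball_normE /ball_ /= ltr_norml; apply/andP; split; lra.
Qed.

Lemma near_small (T d : R) : 0 < d -> \forall m \near \oo, T / m.+1%:R < d.
Proof.
move=> d0.
have [T0|T0] := leP T 0.
  near=> m; apply: (le_lt_trans _ d0); apply: mulr_le0_ge0 => //; rewrite invr_ge0 ler0n.
have := @cvg_harmonic R; move/cvgrPdist_lt => /(_ (d / T)).
rewrite divr_gt0 // => /(_ isT); apply: filterS => m.
rewrite sub0r normrN ger0_norm ?ltW ?harmonic_gt0 //= => h.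
by rewrite mulrC -ltr_pdivlMr.
Unshelve. all: by end_near.
Qed.

Lemma near_all_seq (P : R -> nat -> Prop) (s : seq R) :
  (forall x, x \in s -> \forall m \near \oo, P x m) ->
  \forall m \near \oo, forall x, x \in s -> P x m.
Proof.
elim: s => [|a s IH] H; first by apply: nearW => m x; rewrite in_nil.
have Ha := H a (mem_head a s).
have Hs : \forall m \near \oo, forall x, x \in s -> P x m.
  by apply: IH => x xs; apply: H; rewrite inE xs orbT.
apply: filterS2 Ha Hs => m Pa Ps x; rewrite inE => /orP[/eqP->//|]; exact: Ps.
Qed.

Definition tp (T : R) (m i : nat) : R := Num.min (i%:R * (T / m.+1%:R)) T.

Lemma h_gt0 (T : R) m : 0 < T -> 0 < T / m.+1%:R.
Proof. by move=> T0; rewrite divr_gt0 // ltr0n. Qed.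

Lemma tp_ge (T : R) m i : 0 < T -> (m.+1 <= i)%N -> tp T m i = T.
Proof.
move=> T0 hi; rewrite /tp; apply/min_idPr.
rewrite mulrA ler_pdivlMr ?ltr0n // mulrC; apply: ler_wpM2r; [exact: ltW|by rewrite ler_nat].
Qed.

Lemma tp_k (T x : R) m : 0 < T -> 0 <= x < T ->
  let h := T / m.+1%:R in let k := Num.truncn (x / h) in
  [/\ (k < m.+1)%N, tp T m k = k%:R * h, tp T m k.+1 = k.+1%:R * h,
      k%:R * h <= x & x < k.+1%:R * h].
Proof.
move=> T0 /andP[x0 xT] h k.
have h0 : 0 < h := h_gt0 T m T0.
have xh0 : 0 <= x / h by rewrite divr_ge0 // ltW.
have /andP[k1 k2] := truncn_itv xh0; rewrite -/k in k1 k2.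
have kx : k%:R * h <= x by rewrite -ler_pdivlMr.
have xk : x < k.+1%:R * h by rewrite -ltr_pdivrMr.
have km : (k < m.+1)%N.
  rewrite /k truncn_lt_nat // ltr_pdivrMr // /h mulrCA divff ?mulr1 //.
have hm : m.+1%:R * h = T by rewrite /h mulrCA divff ?mulr1 // pnatr_eq0.
split => //.
- by rewrite /tp; apply/min_idPl; apply: le_trans kx _; apply: ltW.
- rewrite /tp; apply/min_idPl; rewrite -[X in _ <= X]hm; apply: ler_wpM2r; [exact: ltW|by rewrite ler_nat].
Qed.

Lemma qv_sum_tp (f : R -> R) (T : R) m : 0 < T ->
  lim ((fun N => \sum_(i < N) (f (tp T m i.+1) - f (tp T m i)) ^+ 2) @ \oo) =
  \sum_(i < m.+1) (f (tp T m i.+1) - f (tp T m i)) ^+ 2.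
Proof.
move=> T0; apply: lim_near_cst => //.
near=> N.
have HN : (m.+1 <= N)%N by near: N; exists m.+1.
rewrite -(big_mkord (fun _ => true) (fun i => (f (tp T m i.+1) - f (tp T m i)) ^+ 2)).
rewrite (@big_cat_nat _ _ _ m.+1 0 N) //= big_mkord.
rewrite [X in _ + X]big_nat_cond [X in _ + X]big1 ?addr0 // => i /andP[/andP[hi _] _].
by rewrite !tp_ge // ?subrr ?expr0n // (leq_trans hi).
Unshelve. all: by end_near.
Qed.

Lemma sum_sub_iota (F : nat -> R) (r : seq nat) n : (forall i, 0 <= F i) -> uniq r ->
  (forall i, i \in r -> (i < n)%N) -> \sum_(i <- r) F i <= \sum_(i < n) F i.
Proof.
move=> F0 ur rn.
rewrite -(big_mkord (fun _ => true) F) [X in _ <= X](bigID (fun i => i \in r)) /=.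
rewrite -[X in X <= _]addr0; apply: lerD; last by apply: sumr_ge0 => i _.
rewrite le_eqVlt; apply/orP; left; apply/eqP; rewrite -[RHS]big_filter; apply: perm_big.
apply: uniq_perm => //; first exact: filter_uniq (iota_uniq _ _).
by move=> i; rewrite mem_filter mem_index_iota; case: (boolP (i \in r)) => // /rn.
Qed.

Lemma sum_cvg_seq (s : seq R) (a : R -> nat -> R) (l : R -> R) :
  (forall x, x \in s -> a x @ \oo --> l x) ->
  (fun m => \sum_(x <- s) a x m) @ \oo --> \sum_(x <- s) l x.
Proof.
elim: s => [|y s IH] H.
  under eq_fun do rewrite big_nil; rewrite big_nil; exact: cvg_cst.
under eq_fun do rewrite big_cons; rewrite big_cons.
apply: cvgD; first by apply: H; exact: mem_head.
by apply: IH => x xs; apply: H; rewrite inE xs orbT.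
Qed.

Lemma rlim_seq (f : R -> R) (T x : R) : 0 < T -> 0 <= x < T -> cvg (f @ x^'+) ->
  (fun m => f (tp T m (Num.truncn (x / (T / m.+1%:R))).+1)) @ \oo --> lim (f @ x^'+).
Proof.
move=> T0 xT H; apply/cvgrPdist_le => e e0.
have [d d0 Hd] := @right_lim_eps f x _ H e e0.
near=> m.
have hd : T / m.+1%:R < d by near: m; apply: near_small.
have [_ _ -> k1 k2] := @tp_k T x m T0 xT.
apply: Hd => //.
apply: (@le_lt_trans _ _ (x + T / m.+1%:R)); last by rewrite ltrD2l.
move: k1; set k := Num.truncn _; set h := T / _ => k1.
by rewrite -addn1 natrD mulrDl mul1r lerD2r.
Unshelve. all: by end_near.
Qed.

Lemma llim_seq (f : R -> R) (T x : R) : 0 < T -> 0 <= x < T ->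
  (0 < x -> f @ x^'- --> f x) ->
  (fun m => f (tp T m (Num.truncn (x / (T / m.+1%:R))))) @ \oo --> f x.
Proof.
move=> T0 xT H; apply/cvgrPdist_le => e e0.
have [d d0 Hd] : exists2 d, 0 < d & forall y, x - d < y -> y < x -> 0 < x -> `|f x - f y| <= e.
  have [x0|x0] := ltP 0 x.
    have [d d0 Hd] := @left_lim_eps f x _ (H x0) e e0.
    by exists d => // y h1 h2 _; apply: Hd.
  by exists 1 => // y _ _ /(lt_le_trans)/(_ x0); rewrite ltxx.
near=> m.
have hd : T / m.+1%:R < d by near: m; apply: near_small.
have [_ -> _ k1 k2] := @tp_k T x m T0 xT.
move: k1 k2; set k := Num.truncn _; set h := T / _ => k1 k2.
have h0 : 0 < h := h_gt0 T m T0.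
move: k1; rewrite le_eqVlt => /orP[/eqP ->|k1]; first by rewrite subrr normr0 ltW.
apply: Hd => //.
- move: k2; rewrite -addn1 natrD mulrDl mul1r => k2.
  rewrite ltrBlDr; apply: (lt_le_trans k2); rewrite lerD2l ltW //.
- by apply: le_lt_trans k1; rewrite mulr_ge0 // ltW.
Unshelve. all: by end_near.
Qed.

Lemma qv_jump_bound (f : R -> R) (T Q : R) (s : seq R) :
 0 < T -> caglad_on T f ->
 (fun m => \sum_(i < m.+1) (f (tp T m i.+1) - f (tp T m i)) ^+ 2) @ \oo --> Q ->
 uniq s -> (forall x, x \in s -> 0 <= x < T) ->
 \sum_(x <- s) rjump f x ^+ 2 <= Q.
Proof.
move=> T0 [cl cr] HQ us sT.
pose kk m x := Num.truncn (x / (T / m.+1%:R)).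
pose term m i := (f (tp T m i.+1) - f (tp T m i)) ^+ 2.
apply: (ler_cvg_to (f := fun m => \sum_(x <- s) term m (kk m x)) _ HQ).
  apply: sum_cvg_seq => x xs; rewrite /term /rjump.
  have xT := sT x xs.
  rewrite expr2; under eq_fun do rewrite expr2.
  apply: cvgM; apply: cvgB.
  - by apply: rlim_seq => //; apply: cr.
  - apply: llim_seq => // x0; apply: cl; rewrite x0 /=; by case/andP: xT => _ /ltW.
  - by apply: rlim_seq => //; apply: cr.
  - apply: llim_seq => // x0; apply: cl; rewrite x0 /=; by case/andP: xT => _ /ltW.
have Hinj : \forall m \near \oo, forall x, x \in s -> forall y, y \in s ->
    x != y -> T / m.+1%:R < `|x - y|.
  apply: near_all_seq => x xs; apply: near_all_seq => y ys.
  have [->|nxy] := eqVneq x y; first by apply: nearW.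
  have d0 : 0 < `|x - y| by rewrite normr_gt0 subr_eq0.
  by apply: filterS (@near_small T _ d0) => m h _.
apply: filterS Hinj => m Hinj.
rewrite -(big_map (kk m) xpredT (term m)).
apply: sum_sub_iota => //.
- by move=> i; rewrite /term sqr_ge0.
- rewrite map_inj_in_uniq // => x y xs ys e; apply/eqP; apply/negP => /negP nxy.
  have := Hinj x xs y ys nxy.
  have [_ _ _ a1 a2] := @tp_k T x m T0 (sT x xs).
  have [_ _ _ b1 b2] := @tp_k T y m T0 (sT y ys).
  rewrite /kk in e; rewrite -e in b1 b2.
  move: a1 a2 b1 b2; set k := Num.truncn _; set h := T / _.
  rewrite -addn1 natrD mulrDl mul1r => a1 a2 b1 b2.
  rewrite ltNge => /negP; apply; rewrite ler_norml; apply/andP; split; apply: ltW; lra.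
- move=> i /mapP [x xs ->].
  by have [] := @tp_k T x m T0 (sT x xs).
Qed.
End A1.
Arguments tp {R}.
Section D.
Variable R : realType.

Lemma mid_derive (a b : R -> R) y : derivable a y 1 -> derivable b y 1 ->
  derive1 (fun z => (a z + b z) / 2) y = (derive1 a y + derive1 b y) / 2.
Proof.
move=> da db.
have -> : (fun z => (a z + b z) / 2) = (2^-1 : R) \*: (a + b).
  by apply/funext => z /=; rewrite mulrC.
rewrite !derive1E deriveZ ?deriveD //; last exact: derivableD.
by rewrite mulrC.
Qed.

Lemma mid_lip (a b : R -> R) (r Ka Kb : R) :
  (forall y, derivable a y 1) -> (forall y, derivable b y 1) ->
  (forall y, derivable (derive1 a) y 1) -> (forall y, derivable (derive1 b) y 1) ->
  (forall z, `|z| <= r -> `|derive1 (derive1 a) z| <= Ka) ->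
  (forall z, `|z| <= r -> `|derive1 (derive1 b) z| <= Kb) ->
  forall y y', `|y| <= r -> `|y'| <= r ->
  `|derive1 (fun z => (a z + b z) / 2) y - derive1 (fun z => (a z + b z) / 2) y'|
    <= (Ka + Kb) / 2 * `|y - y'|.
Proof.
move=> da db dda ddb ba bb.
pose phi z := (derive1 a z + derive1 b z) / 2.
pose dphi z := (derive1 (derive1 a) z + derive1 (derive1 b) z) / 2.
have ephi : forall z, derive1 (fun z => (a z + b z) / 2) z = phi z.
  by move=> z; rewrite mid_derive.
have dphiP : forall z : R, is_derive z (1 : R) phi (dphi z).
  move=> z.
  have -> : phi = (fun z => (derive1 a z + derive1 b z) / 2) by [].
  have -> : dphi z = derive1 (fun z => (derive1 a z + derive1 b z) / 2) z.
    by rewrite mid_derive.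
  rewrite derive1E; apply: derivableP.
  have -> : (fun z => (derive1 a z + derive1 b z) / 2) = (2^-1 : R) \*: (derive1 a + derive1 b).
    by apply/funext => u /=; rewrite mulrC.
  by apply: derivableZ; apply: derivableD.
have cphi : continuous phi.
  move=> z; apply: differentiable_continuous; apply/derivable1_diffP.
  by have := dphiP z => -[].
have key : forall y y', y <= y' -> `|y| <= r -> `|y'| <= r ->
    `|phi y' - phi y| <= (Ka + Kb) / 2 * `|y' - y|.
  move=> u v uv hu hv.
  have [c cuv ->] := @MVT_segment R phi dphi u v uv (fun x _ => dphiP x)
     (continuous_subspaceT cphi).
  rewrite normrM ler_wpM2r //.
  have hc : `|c| <= r.
    move: cuv; rewrite in_itv /= => /andP[c1 c2].
    rewrite ler_norml; apply/andP; split.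
    - move: hu; rewrite ler_norml => /andP[+ _]; lra.
    - move: hv; rewrite ler_norml => /andP[_ +]; lra.
  rewrite /dphi normrM [`|2^-1|]ger0_norm ?invr_ge0 ?ler0n //.
  apply: ler_wpM2r; first by rewrite invr_ge0 ler0n.
  by apply: le_trans (ler_normD _ _) _; apply: lerD; [apply: ba|apply: bb].
move=> y y' hy hy'; rewrite !ephi.
have [yy|yy] := leP y y'.
  by rewrite distrC [`|y - y'|]distrC; apply: key.
by apply: key => //; apply: ltW.
Qed.
End D.
Section C.
Variable R : realType.

Lemma rjump_unif (Zn : nat -> R -> R) (Z : R -> R) (T : R) :
  caglad_on T Z -> (forall n, caglad_on T (Zn n)) ->
  (forall e, 0 < e -> \forall n \near \oo, forall t, 0 <= t <= T -> `|Zn n t - Z t| <= e) ->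
  forall e, 0 < e -> \forall n \near \oo, forall x, 0 <= x < T -> `|rjump (Zn n) x - rjump Z x| <= e.
Proof.
move=> [_ cZ] cZn H e e0.
have e20 : 0 < e / 2 by rewrite divr_gt0.
apply: filterS (H _ e20) => n hu x /andP[x0 xT].
have hx : 0 <= x <= T by rewrite x0 ltW.
have hxT : 0 <= x < T by rewrite x0 xT.
have cA := (cZn n).2 x hxT.
have cB := cZ x hxT.
have hl : `|lim (Zn n @ x^'+) - lim (Z @ x^'+)| <= e / 2.
  apply: (ler_cvg_to (cvg_norm (cvgB cA cB)) (cvg_cst (e / 2))).
  rewrite near_withinE; apply/nbhs_ballP; exists (T - x) => [|t]; first by rewrite /= subr_gt0.
  rewrite /ball /= ltr_norml => /andP[t1 t2] xt.
  by apply: hu; apply/andP; split; lra.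
rewrite /rjump.
have -> : forall a b c d : R, a - b - (c - d) = (a - c) - (b - d) by move=> *; ring.
apply: le_trans (ler_normB _ _) _.
rewrite [X in _ <= X](splitr e); apply: lerD => //; exact: hu.
Qed.
End C.
Section M.
Context (R : realType) (d : measure_display) (Omega : measurableType d).

Lemma cst_stopping (F : R -> set (set Omega)) (T c : R) :
  filtration F T -> 0 <= c -> stopping_time F T (fun _ => c).
Proof.
move=> [hF _] c0; split => // t ht.
have [[h0 hC _] _] := hF t ht.
change (F t [set w : Omega | c <= t]).
have [ct|ct] := leP c t.
  have -> : [set w : Omega | true] = setT `\` set0.
    by apply/seteqP; split => w //= _; split.
  exact: (hC _ h0).
have -> : [set w : Omega | false] = set0.
  by apply/seteqP; split => w //=.
exact: h0.
Qed.

Lemma parts_id (P : probability Omega R) (F : R -> set (set Omega)) (T : R) :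
  usual_conditions P F T -> 0 < T ->
  partitions_to_id P F T T (fun m i (_ : Omega) => tp T m i).
Proof.
move=> [fF _] T0; split.
- move=> m; split; [|split; [|split; [|split]]].
  + move=> i; apply: cst_stopping => //.
    by rewrite /tp le_min mulr_ge0 ?ler0n ?divr_ge0 ?ltW.
  + by move=> w; rewrite /tp mul0r; apply/min_idPl; apply: ltW.
  + move=> i w; rewrite /tp le_min !ge_min lexx orbT andbT; apply/orP; left.
    by apply: ler_wpM2r; [rewrite divr_ge0 ?ltW|rewrite ler_nat].
  + by move=> i w; rewrite /tp ge_min lexx orbT.
  + by move=> w; exists m.+1; rewrite tp_ge.
- apply: aeW => w e e0.
  apply: filterS (@near_small R T e e0) => m hm i.
  apply: le_trans (ltW hm).
  rewrite /tp.
  set h := T / m.+1%:R.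
  have h0 : 0 < h by rewrite divr_gt0.
  rewrite -addn1 natrD mulrDl mul1r.
  have [x1|x1] := leP (i%:R * h) T.
  + by rewrite lerBlDl ge_min lexx.
  + by rewrite lerBlDl ge_min; apply/orP; right; rewrite lerDl ltW.
Qed.
End M.

Theorem lemma8 (R : realType) (d : measure_display) (Omega : measurableType d)
  (P : probability Omega R) (F : R -> set (set Omega)) (T : R)
  (A B : R -> R -> Omega -> R)
  (Zn : nat -> R -> Omega -> R) (Z : R -> Omega -> R)
  (Qn : nat -> R -> Omega -> R) :
  0 < T ->
  usual_conditions P F T ->
  price_surface P F T A -> price_surface P F T B ->
  (forall n, caglad_predictable F T (Zn n)) ->
  (forall n, is_qv P F T (Zn n) (Qn n)) ->
  caglad_predictable F T Z -> bounded_qv P F T Z ->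
  {ae P, forall w, forall e : R, 0 < e ->
     \forall n \near \oo, forall t, 0 <= t <= T -> `|Zn n t w - Z t w| <= e} ->
  {ae P, forall w, exists C : R, forall n, Qn n T w <= C} ->
  {ae P, forall w, (fun n => BZ A B T (Zn n) w) @ \oo --> BZ A B T Z w}.
Proof.
move=> T0 uc psA psB cpn qvn cpZ _ hconv hbd.
pose tauP := fun m i (_ : Omega) => tp T m i.
have hpart : partitions_to_id P F T T tauP by exact: parts_id.
have hT : 0 <= T <= T by rewrite lexx ltW.
have H3 : {ae P, forall w n, (fun m => qv_sum (Zn n) (tauP m) w) @ \oo --> Qn n T w}.
  by apply: ae_foralln => n; exact: (qvn n T hT tauP hpart).
have HD : forall G, price_surface P F T G ->
    {ae P, forall w, forall r : nat, exists K : R, forall t y, 0 <= t <= T -> `|y| <= r%:R ->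
       `|D2 G t y w| <= K}.
  move=> G [_ [_ [_ [_ [_ [_ [_ [_ lbG]]]]]]]].
  apply: ae_foralln => r.
  have [tau [[_ [_ loc]] [C HC]]] := lbG r.+1%:R (ltr0Sn _ _).
  apply: filterS loc => w hw.
  have [k hk] := hw (T + 1).
  exists (C k) => t y ht hy.
  have tk : t < tau k w.
    case/andP: ht => _ tT; apply: (le_lt_trans tT); apply: (lt_le_trans _ hk).
    by rewrite ltrDl.
  have := HC k t y w ht _ _.
  rewrite (min_l (ltW tk)); apply.
  - by apply: (le_trans hy); rewrite ler_nat.
  - by case/andP: ht => t0 _; apply: le_lt_trans tk.
have HA := HD A psA; have HB := HD B psB.
have aand : forall (Q1 Q2 : Omega -> Prop), {ae P, forall w, Q1 w} -> {ae P, forall w, Q2 w} ->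
    {ae P, forall w, Q1 w /\ Q2 w}.
  move=> Q1 Q2 h1 h2; near=> x; split; [near: x; exact: h1|near: x; exact: h2].
have := aand _ _ hconv (aand _ _ hbd (aand _ _ H3 (aand _ _ HA HB))).
apply: filterS.
move=> w [hu [[C hC] [hq [hA hB]]]].
pose r' := (Num.truncn `|C|).+1.
pose r : R := r'%:R.
have r1 : 1 <= r by rewrite /r ler1n.
have Cr : C <= r ^+ 2.
  apply: (le_trans (ler_norm C)); apply: ltW; apply: (lt_le_trans (truncnS_gt _)).
  by rewrite expr2 ler_peMr // (le_trans ler01 r1).
have [KA hKA] := hA r'.
have [KB hKB] := hB r'.
have KA0 : 0 <= KA.
  by apply: le_trans (hKA 0 0 _ _); rewrite ?normr_ge0 ?lexx ?ltW ?normr0 ?ler0n.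
have KB0 : 0 <= KB.
  by apply: le_trans (hKB 0 0 _ _); rewrite ?normr_ge0 ?lexx ?ltW ?normr0 ?ler0n.
have hru := @rjump_unif R (fun n t => Zn n t w) (Z ^~ w) T (cpZ.1 w) (fun n => (cpn n).1 w) hu.
have Hn : forall n (s : seq R), uniq s -> (forall x, x \in s -> 0 <= x < T) ->
    \sum_(x <- s) rjump (Zn n ^~ w) x ^+ 2 <= C.
  move=> n s us sS; apply: (le_trans _ (hC n)).
  apply: (@qv_jump_bound R (Zn n ^~ w) T (Qn n T w) s T0 ((cpn n).1 w) _ us sS).
  have E : (fun m => qv_sum (Zn n) (tauP m) w) =
      (fun m => \sum_(i < m.+1) (Zn n (tp T m i.+1) w - Zn n (tp T m i) w) ^+ 2).
    by apply/funext => m; exact: (@qv_sum_tp R (fun t => Zn n t w) T m T0).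
  by rewrite -E; exact: hq.
apply: (@sumR_conv R [set s | 0 <= s < T] (fun n => rjump (Zn n ^~ w)) (rjump (Z ^~ w))
   (fun x y => Mp A B x y w) C r ((KA + KB) / 2)).
- by rewrite divr_ge0 ?addr_ge0 ?ler0n.
- exact: le_trans ler01 r1.
- exact: Cr.
- exact: Hn.
- move=> s us sS.
  apply: (ler_cvg_to (@sum_cvg_seq R s (fun x n => rjump (Zn n ^~ w) x ^+ 2) (fun x => rjump (Z ^~ w) x ^+ 2) _) (cvg_cst C)).
    move=> x xs; rewrite expr2; under eq_fun do rewrite expr2.
    have hcx : (fun n => rjump (Zn n ^~ w) x) @ \oo --> rjump (Z ^~ w) x.
      apply/cvgrPdist_le => e e0; apply: filterS (hru e e0) => n h.
      by rewrite distrC; apply: h; apply: sS.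
    exact: (cvgM hcx hcx).
  by apply: nearW => n; apply: Hn.
- exact: hru.
- move=> x y y' Sx hy hy'.
  have hx : 0 <= x <= T by case/andP: Sx => -> /ltW ->.
  case: psA => _ [_ [dA _]]; case: psB => _ [_ [dB _]].
  have [dA1 [dA2 _]] := dA x w hx; have [dB1 [dB2 _]] := dB x w hx.
  apply: (@mid_lip R (fun z => A x z w) (fun z => B x z w) r KA KB dA1 dB1 dA2 dB2 _ _ y y' hy hy').
  + by move=> z hz; apply: hKA.
  + by move=> z hz; apply: hKB.
Unshelve. all: by end_near.
Qed.
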